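(* Let $\alpha_1\approx 0.24760367$ be the root in $[0,1]$ of $16\alpha^4+16\alpha^3-52\alpha^2+48\alpha-9=0$ and $\alpha_2\approx0.2797707433$ the root in $[0,1]$ of $8\alpha^4-8\alpha^3+8\alpha^2=1/2$, and let $\alpha_1\le\alpha\le\alpha_2$. If $(x,y)\in A_2$ and $G_\alpha^i(x,y)\in A_1$ for $i=1,2,3$, then $G_\alpha^4(x,y)\in A_2$; i.e., a point coming from $A_2$ remains in $A_1$ for at most $3$ consecutive steps.
   Context: Let $\tau:[0,1]\to[0,1]$ be the symmetric tent map, $\tau(x)=2x$ for $0\le x<1/2$ and $\tau(x)=2-2x$ for $1/2\le x\le 1$. For $0<\alpha<1$ define $G_\alpha:[0,1]^2\to[0,1]^2$ by $G_\alpha(x,y)=(y,\tau(\alpha y+(1-\alpha)x))$. Let $S(x,y)=\alpha y+(1-\alpha)x$, $A_1=\{(x,y)\in[0,1]^2: S(x,y)<1/2\}$ and $A_2=\{(x,y)\in[0,1]^2: S(x,y)\ge 1/2\}$. *)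

(* Defs.v *)
From Stdlib Require Import Reals Lra.
Open Scope R_scope.

Definition tau (x : R) : R := if Rlt_dec x (1/2) then 2 * x else 2 - 2 * x.

Definition S (alpha : R) (p : R * R) : R := alpha * snd p + (1 - alpha) * fst p.

Definition G (alpha : R) (p : R * R) : R * R := (snd p, tau (S alpha p)).

Fixpoint Giter (alpha : R) (n : nat) (p : R * R) : R * R :=
  match n with
  | O => p
  | Datatypes.S k => G alpha (Giter alpha k p)
  end.

Definition in_square (p : R * R) : Prop :=
  0 <= fst p <= 1 /\ 0 <= snd p <= 1.

Definition A_1 (alpha : R) (p : R * R) : Prop := in_square p /\ S alpha p < 1/2.
Definition A_2 (alpha : R) (p : R * R) : Prop := in_square p /\ S alpha p >= 1/2.

(* Main.v *)
Require Import Defs.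
From Stdlib Require Import Reals Lra Psatz.
Open Scope R_scope.

Lemma tau_lt v : v < 1/2 -> tau v = 2 * v.
Proof. intros; unfold tau; destruct (Rlt_dec v (1/2)); lra. Qed.
Lemma tau_ge v : v >= 1/2 -> tau v = 2 - 2 * v.
Proof. intros; unfold tau; destruct (Rlt_dec v (1/2)); lra. Qed.

Lemma alpha_lo a : 0 <= a <= 1 ->
  16 * a ^ 4 + 16 * a ^ 3 - 52 * a ^ 2 + 48 * a - 9 = 0 -> 6/25 <= a.
Proof.
  intros Ha Hf. destruct (Rle_lt_dec (6/25) a) as [h|h]; auto.
  exfalso. nra.
Qed.

Lemma alpha_hi a : 0 <= a <= 1 ->
  8 * a ^ 4 - 8 * a ^ 3 + 8 * a ^ 2 = 1 / 2 -> a <= 3/10.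
Proof.
  intros Ha Hf. destruct (Rle_lt_dec a (3/10)) as [h|h]; auto.
  exfalso. nra.
Qed.

Lemma Cx_neg a : 6/25 <= a <= 3/10 ->
  -4 + 12*a - 36*a^2 + 52*a^3 - 40*a^4 + 16*a^5 <= 0.
Proof. intros. nra. Qed.

Lemma Cy_pos a : 6/25 <= a <= 3/10 ->
  0 <= 4*a - 8*a^2 - 12*a^3 + 16*a^4 - 16*a^5.
Proof. intros. nra. Qed.

Lemma P_big a : 6/25 <= a <= 3/10 ->
  1/2 <= 4*a - 8*a^2 + 28*a^3 - 24*a^4 + 16*a^5.
Proof. intros. nra. Qed.

Theorem proposition9 (alpha1 alpha2 alpha x y : R) :
  0 <= alpha1 <= 1 ->
  16 * alpha1 ^ 4 + 16 * alpha1 ^ 3 - 52 * alpha1 ^ 2 + 48 * alpha1 - 9 = 0 ->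
  0 <= alpha2 <= 1 ->
  8 * alpha2 ^ 4 - 8 * alpha2 ^ 3 + 8 * alpha2 ^ 2 = 1 / 2 ->
  alpha1 <= alpha <= alpha2 ->
  A_2 alpha (x, y) ->
  (forall i : nat, (1 <= i)%nat -> (i <= 3)%nat -> A_1 alpha (Giter alpha i (x, y))) ->
  A_2 alpha (Giter alpha 4 (x, y)).
Proof.
  intros H1r H1 H2r H2 Ha H0 HA.
  pose proof (alpha_lo _ H1r H1) as L. pose proof (alpha_hi _ H2r H2) as U.
  assert (Ha' : 6/25 <= alpha <= 3/10) by lra.
  pose proof (Cx_neg _ Ha') as Cx. pose proof (Cy_pos _ Ha') as Cy.
  pose proof (P_big _ Ha') as P.
  pose proof (HA 1%nat ltac:(lia) ltac:(lia)) as E1.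
  pose proof (HA 2%nat ltac:(lia) ltac:(lia)) as E2.
  pose proof (HA 3%nat ltac:(lia) ltac:(lia)) as E3.
  clear HA. cbn [Giter] in *.
  unfold A_1, A_2, in_square, G, S in *.
  cbn [fst snd] in *.
  destruct H0 as [[Hx Hy] Hs0].
  rewrite (tau_ge _ Hs0) in *.
  set (z1 := 2 - 2 * (alpha * y + (1 - alpha) * x)) in *.
  destruct E1 as [_ Hs1].
  rewrite (tau_lt _ Hs1) in *.
  set (z2 := 2 * (alpha * z1 + (1 - alpha) * y)) in *.
  destruct E2 as [[_ Hz2] Hs2].
  rewrite (tau_lt _ Hs2) in *.
  set (z3 := 2 * (alpha * z2 + (1 - alpha) * z1)) in *.
  destruct E3 as [[Hz2' Hz3] Hs3].
  rewrite (tau_lt _ Hs3).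
  set (z4 := 2 * (alpha * z3 + (1 - alpha) * z2)).
  assert (Hid : alpha * z4 + (1 - alpha) * z3 =
    (4*alpha - 8*alpha^2 + 28*alpha^3 - 24*alpha^4 + 16*alpha^5)
    + (-4 + 12*alpha - 36*alpha^2 + 52*alpha^3 - 40*alpha^4 + 16*alpha^5) * (x - 1)
    + (4*alpha - 8*alpha^2 - 12*alpha^3 + 16*alpha^4 - 16*alpha^5) * y).
  { unfold z4, z3, z2, z1. ring. }
  assert (0 <= alpha * z3) by (apply Rmult_le_pos; lra).
  assert (0 <= (1 - alpha) * z2).
  { apply Rmult_le_pos. lra. destruct Hz2; assumption. }
  split; [split; [lra| unfold z4; lra]|].
  rewrite Hid.
  assert (0 <= (-4 + 12*alpha - 36*alpha^2 + 52*alpha^3 - 40*alpha^4 + 16*alpha^5) * (x - 1)) by nra.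
  assert (0 <= (4*alpha - 8*alpha^2 - 12*alpha^3 + 16*alpha^4 - 16*alpha^5) * y) by nra.
  lra.
Qed.
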